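(* Let $n\ge4$, let $(e_i)_{i=0}^n$ be the standard unit vector basis of the Euclidean space $\ell_2^{n+1}$, let $M=\sqrt{(2/\ln 2)\,n\log_2 n}$, and let $$A=\Bigl\{M\sum_{i=1}^n t_ie_i+E_{n-1}(t_1,\dots,t_n)\,e_0:\ (t_1,\dots,t_n)\in\Delta_{n-1}\Bigr\}.$$ Then $A$ is approximately convex, $$\mathcal{H}(A,\operatorname{Co}(A))=\log_2 n,\qquad\text{and}\qquad\operatorname{diam}(A)\le\frac{2}{\sqrt{\ln 2}}\sqrt{n\log_2 n}+\log_2 n .$$
   Context: $\Delta_{n-1}=\{(t_1,\dots,t_n): t_i\ge0,\sum_i t_i=1\}$, and $E_{n-1}(t_1,\dots,t_n)=\sum_{i=1}^n t_i\log_2(1/t_i)$ with $0\log_2(1/0)=0$. A set $A$ is approximately convex if $d(tx+(1-t)y,A)\le1$ for all $x,y\in A$, $t\in[0,1]$, where $d(x,A)=\inf_{a\in A}\|x-a\|$. $\mathcal{H}$ is the Hausdorff distance, $\operatorname{Co}$ the convex hull, $\operatorname{diam}(A)=\sup\{\|x-y\|:x,y\in A\}$. *)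

(* Defs.v *)
(* R : realType. Points of l_2^{n+1} are functions 'I_n.+1 -> R,
   index 0 being the e_0 coordinate. *)
From mathcomp Require Import all_boot all_order all_algebra.
From mathcomp Require Import all_classical all_reals.
From mathcomp Require Import exp.
Set Implicit Arguments. Unset Strict Implicit. Unset Printing Implicit Defensive.
Import Order.TTheory GRing.Theory Num.Theory.
Local Open Scope ring_scope.
Local Open Scope classical_set_scope.

Section Defs.
Variable R : realType.

Definition log2 (x : R) : R := ln x / ln 2.

Definition ent_term (x : R) : R := if x == 0 then 0 else x * log2 (x^-1).

Definition entropy n (t : 'I_n -> R) : R := \sum_(i < n) ent_term (t i).

Definition simplex n : set ('I_n -> R) :=
  [set t | (forall i, 0 <= t i) /\ \sum_(i < n) t i = 1].

Definition edist k (x y : 'I_k -> R) : R := Num.sqrt (\sum_(i < k) (x i - y i) ^+ 2).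

Definition dist_set k (x : 'I_k -> R) (A : set ('I_k -> R)) : R :=
  inf [set edist x a | a in A].

Definition approx_convex k (A : set ('I_k -> R)) : Prop :=
  forall x y, A x -> A y -> forall t : R, 0 <= t <= 1 ->
    dist_set (fun i => t * x i + (1 - t) * y i) A <= 1.

Definition conv_hull k (A : set ('I_k -> R)) : set ('I_k -> R) :=
  [set x | exists (m : nat) (w : 'I_m -> R) (p : 'I_m -> 'I_k -> R),
     (forall j, 0 <= w j) /\ \sum_(j < m) w j = 1 /\ (forall j, A (p j)) /\
     x = (fun i => \sum_(j < m) w j * p j i)].

Definition hausdorff k (A B : set ('I_k -> R)) : R :=
  Order.max (sup [set dist_set a B | a in A]) (sup [set dist_set b A | b in B]).

Definition diam k (A : set ('I_k -> R)) : R :=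
  sup [set d | exists x y, A x /\ A y /\ d = edist x y].

Definition Mconst (n : nat) : R := Num.sqrt ((2 / ln 2) * n%:R * log2 n%:R).

Definition embed n (t : 'I_n -> R) : 'I_n.+1 -> R :=
  fun i => match unlift ord0 i with
           | Some j => Mconst n * t j
           | None => entropy t
           end.

Definition setA (n : nat) : set ('I_n.+1 -> R) := [set @embed n t | t in @simplex n].

End Defs.
Arguments setA R n : clear implicits.

(* Main.v *)
Require Import Defs.
From mathcomp Require Import all_boot all_order all_algebra.
From mathcomp Require Import all_classical all_reals.
From mathcomp Require Import exp.
From mathcomp Require Import ring lra.
Import Order.TTheory GRing.Theory Num.Theory.
Local Open Scope ring_scope.

Section Anal.
Variable R : realType.
Implicit Types x y a c l m : R.

Definition phi x : R := - (x * ln x).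

Lemma ln_le_sub1 x : 0 < x -> ln x <= x - 1.
Proof.
move=> x0; have := @le_ln1Dx R (x - 1).
have -> : 1 + (x - 1) = x by ring.
apply; lra.
Qed.

Lemma gibbs a c : 0 <= a -> 0 <= c -> (0 < a -> 0 < c) ->
  a - c <= a * ln a - a * ln c.
Proof.
move=> a0 c0 ac; have [->|ap] := eqVneq a 0; first by rewrite !mul0r subrr; lra.
have a0' : 0 < a by rewrite lt_def ap a0.
have c0' := ac a0'.
have h := @ln_le_sub1 (c / a) (divr_gt0 c0' a0').
rewrite lnM ?posrE ?invr_gt0 // lnV ?posrE // in h.
have : a * (ln c + - ln a) <= a * (c / a - 1) by rewrite ler_pM2l.
have -> : a * (c / a - 1) = c - a by field; rewrite gt_eqF.
lra.
Qed.

Lemma ln2_gt0 : 0 < ln (2 : R).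
Proof. by apply: ln_gt0; lra. Qed.

Lemma ent_phi x : 0 <= x -> ent_term x = phi x / ln 2.
Proof.
move=> x0; rewrite /ent_term /phi /log2; case: eqP => [->|/eqP xn0].
  by rewrite mul0r oppr0 mul0r.
have xp : 0 < x by rewrite lt_def xn0 x0.
by rewrite lnV ?posrE // mulrA mulrN mulNr.
Qed.

Lemma phi0 : phi 0 = 0.
Proof. by rewrite /phi mul0r oppr0. Qed.

Lemma phi_ge0 x : 0 <= x <= 1 -> 0 <= phi x.
Proof.
case/andP=> x0 x1; rewrite /phi oppr_ge0.
have [->|xn0] := eqVneq x 0; first by rewrite mul0r.
by rewrite mulr_ge0_le0 // ln_le0.
Qed.

Lemma phi_concave l m a b : 0 <= l -> 0 <= m -> l + m = 1 -> 0 <= a -> 0 <= b ->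
  l * phi a + m * phi b <= phi (l * a + m * b).
Proof.
move=> l0 m0 lm a0 b0.
have [el|lp] := eqVneq l 0.
  rewrite el; have -> : m = 1 by lra.
  by rewrite !mul0r !mul1r !add0r.
have [em|mp] := eqVneq m 0.
  rewrite em; have -> : l = 1 by lra.
  by rewrite !mul0r !mul1r !addr0.
have l0' : 0 < l by rewrite lt_def lp l0.
have m0' : 0 < m by rewrite lt_def mp m0.
set c := l * a + m * b.
have c0 : 0 <= c by rewrite addr_ge0 // mulr_ge0.
have h1 := @gibbs a c a0 c0 (fun ha => ltr_wpDr (mulr_ge0 m0 b0) (mulr_gt0 l0' ha)).
have h2 := @gibbs b c b0 c0 (fun hb => ltr_wpDl (mulr_ge0 l0 a0) (mulr_gt0 m0' hb)).
have e : c * ln c = l * (a * ln c) + m * (b * ln c) by rewrite /c; ring.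
have H : l * (a - c) + m * (b - c) = 0.
  rewrite /c; have -> : m = 1 - l by lra. ring.
have := lerD (ler_wpM2l l0 h1) (ler_wpM2l m0 h2); rewrite H => h.
rewrite /phi e; move: h; clearbody c.
set X := a * ln a; set Y := b * ln b; set Z := ln c.
rewrite !mulrBr; lra.
Qed.

Lemma phi_subadd x y : 0 <= x -> 0 <= y -> phi (x + y) <= phi x + phi y.
Proof.
move=> x0 y0; rewrite /phi mulrDl opprD lerD //.
  have [->|xn] := eqVneq x 0; first by rewrite !mul0r.
  have xp : 0 < x by rewrite lt_def xn x0.
  rewrite lerN2 ler_pM2l // ler_ln ?posrE ?lerDl //; exact: ltr_wpDr.
have [->|yn] := eqVneq y 0; first by rewrite !mul0r.
have yp : 0 < y by rewrite lt_def yn y0.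
rewrite lerN2 ler_pM2l // ler_ln ?posrE ?lerDr //; exact: ltr_wpDl.
Qed.

Lemma phi_scale l a : 0 <= l -> 0 <= a -> phi (l * a) = l * phi a + a * phi l.
Proof.
move=> l0 a0.
have [->|ln0] := eqVneq l 0; first by rewrite !(mul0r, mulr0, phi0, addr0).
have [->|an0] := eqVneq a 0; first by rewrite !(mul0r, mulr0, phi0, addr0).
have lp : 0 < l by rewrite lt_def ln0 l0.
have ap : 0 < a by rewrite lt_def an0 a0.
rewrite /phi lnM ?posrE //; ring.
Qed.

Lemma phi_binary l m : 0 <= l -> 0 <= m -> l + m = 1 -> phi l + phi m <= ln 2.
Proof.
move=> l0 m0 lm.
have h0 : 0 < 2^-1 :> R by rewrite invr_gt0; lra.
have h1 := @gibbs l 2^-1 l0 (ltW h0) (fun _ => h0).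
have h2 := @gibbs m 2^-1 m0 (ltW h0) (fun _ => h0).
have e2 : ln (2^-1 : R) = - ln 2 by rewrite lnV // posrE; lra.
rewrite e2 !mulrN opprK in h1 h2; rewrite /phi.
have e3 : l * ln 2 + m * ln 2 = ln 2 by rewrite -mulrDl lm mul1r.
move: h1 h2 e3.
set X := l * ln l; set Y := m * ln m; set Z := ln 2; set U := l * Z; set V := m * Z.
lra.
Qed.

Lemma keyH (t nR : R) : 0 <= t -> 0 < nR -> t * ln t + t * ln nR <= t * (nR * t - 1).
Proof.
move=> t0 n0; have [->|tn] := eqVneq t 0; first by rewrite !mul0r addr0.
have tp : 0 < t by rewrite lt_def tn t0.
rewrite -mulrDr ler_pM2l // -lnM ?posrE // mulrC; exact: (@ln_le_sub1 (nR * t) (mulr_gt0 n0 tp)).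
Qed.


Lemma simplex_le1 n (t : 'I_n -> R) i : simplex t -> t i <= 1.
Proof.
case=> t0 <-; rewrite (bigD1 i) //= lerDl; exact: sumr_ge0.
Qed.

Lemma entropyE n (t : 'I_n -> R) : (forall i, 0 <= t i) ->
  entropy t = (\sum_i phi (t i)) / ln 2.
Proof.
move=> t0; rewrite /entropy mulr_suml; apply: eq_bigr => i _; exact: ent_phi.
Qed.

Lemma ent_ge0 n (t : 'I_n -> R) : simplex t -> 0 <= entropy t.
Proof.
move=> st; rewrite entropyE; last by case: st.
apply: divr_ge0; last exact: ltW ln2_gt0.
apply: sumr_ge0 => i _; apply: phi_ge0; rewrite simplex_le1 // andbT; by case: st.
Qed.

Lemma sum_phi_le n (t : 'I_n -> R) : (0 < n)%N -> simplex t -> \sum_i phi (t i) <= ln n%:R.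
Proof.
move=> n0 [t0 t1].
have np : 0 < n%:R :> R by rewrite ltr0n.
have ni : 0 < n%:R^-1 :> R by rewrite invr_gt0.
have h i := @gibbs (t i) n%:R^-1 (t0 i) (ltW ni) (fun _ => ni).
have : \sum_i (t i - n%:R^-1) <= \sum_i (t i * ln (t i) - t i * ln n%:R^-1).
  by apply: ler_sum => i _; exact: h.
rewrite sumrB t1 sumr_const card_ord -[_ *+ n]mulr_natr mulVf ?gt_eqF // subrr.
rewrite sumrB lnV ?posrE // /phi.
rewrite -mulr_suml t1 mul1r sumrN; lra.
Qed.

Lemma ent_le n (t : 'I_n -> R) : (0 < n)%N -> simplex t -> entropy t <= log2 n%:R.
Proof.
move=> n0 st; rewrite entropyE; last by case: st.
rewrite /log2 ler_pM2r ?invr_gt0 ?ln2_gt0 //; exact: sum_phi_le.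
Qed.

Lemma ent_concave n (s t : 'I_n -> R) l : simplex s -> simplex t -> 0 <= l <= 1 ->
  l * entropy s + (1 - l) * entropy t <= entropy (fun i => l * s i + (1 - l) * t i).
Proof.
move=> [s0 _] [t0 _] /andP[l0 l1].
have m0 : 0 <= 1 - l by lra.
rewrite !entropyE // => [|i]; last by rewrite addr_ge0 // mulr_ge0.
rewrite !mulrA -mulrDl ler_pM2r ?invr_gt0 ?ln2_gt0 //.
rewrite !mulr_sumr -big_split /=; apply: ler_sum => i _.
apply: phi_concave => //; lra.
Qed.

Lemma ent_mix_ub n (s t : 'I_n -> R) l : simplex s -> simplex t -> 0 <= l <= 1 ->
  entropy (fun i => l * s i + (1 - l) * t i) <= l * entropy s + (1 - l) * entropy t + 1.
Proof.
move=> [s0 s1] [t0 t1] /andP[l0 l1].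
have m0 : 0 <= 1 - l by lra.
have l2 := ln2_gt0.
rewrite !entropyE // => [|i]; last by rewrite addr_ge0 // mulr_ge0.
set Su := \sum_i _; set Ss := \sum_i _; set St := \sum_i _.
have -> : l * (Ss / ln 2) + (1 - l) * (St / ln 2) + 1 = (l * Ss + (1 - l) * St + ln 2) / ln 2.
  by field; rewrite gt_eqF.
rewrite ler_pM2r ?invr_gt0 // /Su /Ss /St.
have h i : phi (l * s i + (1 - l) * t i) <=
    l * phi (s i) + s i * phi l + ((1 - l) * phi (t i) + t i * phi (1 - l)).
  rewrite -!phi_scale //; apply: phi_subadd; exact: mulr_ge0.
apply: le_trans (ler_sum _ (fun i _ => h i)) _.
rewrite big_split /= !big_split /= -!mulr_sumr -!mulr_suml s1 t1 !mul1r.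
have lm : l + (1 - l) = 1 by ring.
have := @phi_binary l (1 - l) l0 m0 lm. lra.
Qed.

Lemma key_ineq n (t : 'I_n -> R) : (0 < n)%N -> simplex t ->
  ln n%:R - \sum_i phi (t i) <= n%:R * \sum_i (t i - n%:R^-1) ^+ 2.
Proof.
move=> n0 [t0 t1].
have np : 0 < n%:R :> R by rewrite ltr0n.
have h i := @keyH (t i) n%:R (t0 i) np.
have : \sum_i (t i * ln (t i) + t i * ln n%:R) <= \sum_i t i * (n%:R * t i - 1).
  by apply: ler_sum => i _; exact: h.
rewrite big_split /= -mulr_suml t1 mul1r.
have -> : \sum_i (t i - n%:R^-1) ^+ 2 = \sum_i t i ^+ 2 - n%:R^-1.
  have e i : (t i - n%:R^-1) ^+ 2 = t i ^+ 2 - (2 * n%:R^-1) * t i + n%:R^-1 ^+ 2 by ring.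
  under eq_bigr do rewrite e.
  rewrite big_split sumrB /= -mulr_sumr t1 sumr_const card_ord -mulr_natr.
  by rewrite -[_ *+ n]mulr_natr; field; rewrite gt_eqF.
have -> : \sum_i t i * (n%:R * t i - 1) = n%:R * \sum_i t i ^+ 2 - 1.
  rewrite (eq_bigr (fun i => n%:R * t i ^+ 2 - t i)); last by move=> i _; ring.
  by rewrite sumrB -mulr_sumr t1.
rewrite /phi sumrN mulrBr mulfV ?gt_eqF //; lra.
Qed.

End Anal.

Section Geo.
Variable R : realType.

Lemma dist_le k (x : 'I_k -> R) (A : set ('I_k -> R)) a : A a -> dist_set x A <= edist x a.
Proof.
move=> Aa; rewrite /dist_set.
have hl : has_lbound [set edist x b | b in A].
  by exists 0 => _ [b _ <-]; exact: sqrtr_ge0.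
by apply: (ge_inf hl); exists a.
Qed.

Lemma dist_ge k (x : 'I_k -> R) (A : set ('I_k -> R)) d : (exists a, A a) ->
  (forall a, A a -> d <= edist x a) -> d <= dist_set x A.
Proof.
move=> [a Aa] h; apply: lb_le_inf; first by exists (edist x a), a.
by move=> _ [b Ab <-]; exact: h.
Qed.

Lemma edist_self k (x : 'I_k -> R) : edist x x = 0.
Proof. by rewrite /edist big1 ?sqrtr0 // => i _; rewrite subrr expr2 mulr0. Qed.

Lemma edist_split n (x y : 'I_n.+1 -> R) : edist x y =
  Num.sqrt ((x ord0 - y ord0) ^+ 2 + \sum_(i < n) (x (lift ord0 i) - y (lift ord0 i)) ^+ 2).
Proof. by rewrite /edist big_ord_recl. Qed.

Lemma embed0 n (t : 'I_n -> R) : embed t ord0 = entropy t.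
Proof. by rewrite /embed unlift_none. Qed.

Lemma embedS n (t : 'I_n -> R) i : embed t (lift ord0 i) = Mconst R n * t i.
Proof. by rewrite /embed liftK. Qed.

Lemma ent_delta n (j : 'I_n) : entropy (fun i => (i == j)%:R : R) = 0.
Proof.
rewrite /entropy big1 // => i _; rewrite /ent_term; case: (i == j) => /=.
  by rewrite oner_eq0 invr1 /log2 ln1 mul0r mulr0.
by rewrite eqxx.
Qed.

Lemma simplex_delta n (j : 'I_n) : simplex (fun i => (i == j)%:R : R).
Proof.
split=> [i|]; first by case: (i == j).
by rewrite (bigD1 j) //= eqxx big1 ?addr0 // => i /negbTE ->.
Qed.

End Geo.

Section Main.
Variable R : realType.

Lemma part_ac n : (0 < n)%N -> approx_convex (setA R n).
Proof.
move=> n0 _ _ [s ss <-] [s' ss' <-] l /andP[l0 l1].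
set u := fun i => l * s i + (1 - l) * s' i.
have su : simplex u.
  case: ss => s0 s1; case: ss' => t0 t1; split.
    by move=> i; rewrite /u addr_ge0 // mulr_ge0 //; lra.
  by rewrite /u big_split /= -!mulr_sumr s1 t1; ring.
have Au : setA R n (embed u) by exists u.
apply: le_trans (@dist_le _ _ _ _ _ Au) _.
rewrite edist_split big1 ?addr0; last first.
  move=> i _; rewrite !embedS /u.
  rewrite [X in X ^+ 2](_ : _ = 0); first by rewrite expr2 mulr0.
  ring.
rewrite sqrtr_sqr !embed0 ler_norml.
have h1 := @ent_concave _ n s s' l ss ss'.
have h2 := @ent_mix_ub _ n s s' l ss ss'.
rewrite /u; move: h1 h2; rewrite l0 l1 /=; move=> h1 h2.
have h1' := h1 isT; have h2' := h2 isT; lra.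
Qed.


Lemma log2_ge0 n : (0 < n)%N -> 0 <= log2 (n%:R : R).
Proof.
move=> n0; rewrite /log2 divr_ge0 ?ln_ge0 ?ler1n //; exact: ltW ln2_gt0.
Qed.

Lemma Msq n : (0 < n)%N -> Mconst R n ^+ 2 = 2 / ln 2 * n%:R * log2 n%:R.
Proof.
move=> n0; rewrite /Mconst sqr_sqrtr // mulr_ge0 ?log2_ge0 // mulr_ge0 ?ler0n //.
by rewrite divr_ge0 // ltW // ln2_gt0.
Qed.

Lemma in_hull k (A : set ('I_k -> R)) a : A a -> conv_hull A a.
Proof.
move=> Aa; exists 1%N, (fun=> 1), (fun=> a); split=> //; split; first by rewrite big_ord1.
split=> //; apply/funext => i; by rewrite big_ord1 mul1r.
Qed.

Lemma hull_ub n : (0 < n)%N -> forall b, conv_hull (setA R n) b ->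
  dist_set b (setA R n) <= log2 n%:R.
Proof.
move=> n0 _ [m [w [p [w0 [w1 [pA ->]]]]]].
have : forall j, exists t, simplex t /\ embed t = p j.
  by move=> j; case: (pA j) => t ? ?; exists t.
case/choice => T hT.
set u := fun i => \sum_j w j * T j i.
have su : simplex u.
  split; first by move=> i; apply: sumr_ge0 => j _; rewrite mulr_ge0 //; case: (hT j) => [[]].
  rewrite /u exchange_big /=.
  rewrite (eq_bigr (fun j => w j)) // => j _; rewrite -mulr_sumr.
  by case: (hT j) => [[_ ->]] _; rewrite mulr1.
have Au : setA R n (embed u) by exists u.
apply: le_trans (@dist_le _ _ _ _ _ Au) _.
rewrite edist_split [X in _ + X]big1 ?addr0; last first.
  move=> i _ /=; rewrite embedS /u.
  rewrite (eq_bigr (fun j => w j * (Mconst R n * T j i))); last first.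
    by move=> j _; rewrite -(proj2 (hT j)) embedS.
  rewrite [X in X ^+ 2](_ : _ = 0); first by rewrite expr2 mulr0.
  by rewrite mulr_sumr -sumrB big1 // => j _; ring.
rewrite sqrtr_sqr embed0.
rewrite (eq_bigr (fun j => w j * entropy (T j))); last first.
  by move=> j _; rewrite -(proj2 (hT j)) embed0.
set c := \sum_j _.
have c0 : 0 <= c by apply: sumr_ge0 => j _; rewrite mulr_ge0 // ent_ge0 //; case: (hT j).
have cL : c <= log2 n%:R.
  have -> : log2 (n%:R : R) = \sum_j w j * log2 n%:R by rewrite -mulr_suml w1 mul1r.
  apply: ler_sum => j _; apply: ler_wpM2l => //; apply: ent_le => //; by case: (hT j).
have e0 := @ent_ge0 _ _ _ su; have eL := @ent_le _ _ _ n0 su.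
rewrite ler_norml; apply/andP; split; lra.
Qed.


Definition b0 n : 'I_n.+1 -> R :=
  fun i => \sum_(j < n) n%:R^-1 * embed (fun i => (i == j)%:R : R) i.

Lemma b0_hull n : (0 < n)%N -> conv_hull (setA R n) (b0 n).
Proof.
move=> n0; exists n, (fun=> n%:R^-1), (fun j => embed (fun i => (i == j)%:R : R)).
split; first by move=> j; rewrite invr_ge0 ler0n.
split; first by rewrite sumr_const card_ord -[_ *+ n]mulr_natr mulVf // pnatr_eq0 -lt0n.
split=> //; move=> j; exists (fun i => (i == j)%:R : R) => //; exact: simplex_delta.
Qed.

Lemma b0_0 n : b0 n ord0 = 0.
Proof. by rewrite /b0 big1 // => j _; rewrite embed0 ent_delta mulr0. Qed.

Lemma b0_S n i : b0 n (lift ord0 i) = n%:R^-1 * Mconst R n.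
Proof.
rewrite /b0 (bigD1 i) //= big1 ?addr0.
  by rewrite embedS eqxx mulr1.
by move=> j /negbTE ji; rewrite embedS eq_sym ji mulr0 mulr0.
Qed.

Lemma b0_lb n : (0 < n)%N -> log2 n%:R <= dist_set (b0 n) (setA R n).
Proof.
move=> n0; apply: dist_ge.
  exists (embed (fun i => (i == Ordinal n0)%:R : R)).
  by exists (fun i => (i == Ordinal n0)%:R : R) => //; exact: simplex_delta.
move=> _ [t st <-].
have L0 := @log2_ge0 n n0.
rewrite edist_split -(ger0_norm L0) -sqrtr_sqr ler_sqrt; last first.
  by rewrite addr_ge0 ?sqr_ge0 // sumr_ge0 // => i _; rewrite sqr_ge0.
rewrite b0_0 embed0.
rewrite (eq_bigr (fun i => Mconst R n ^+ 2 * (t i - n%:R^-1) ^+ 2)); last first.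
  by move=> i _; rewrite b0_S embedS; ring.
rewrite -mulr_sumr Msq //.
have key := @key_ineq _ n t n0 st.
have np : 0 < n%:R :> R by rewrite ltr0n.
have l2 := ln2_gt0 R.
rewrite entropyE; last by case: st.
set D := \sum_i (t i - n%:R^-1) ^+ 2 in key *.
set P := \sum_i phi _ (t i) in key *.
have D0 : 0 <= D by apply: sumr_ge0 => i _; rewrite sqr_ge0.
have E0 : 0 <= P / ln 2 by rewrite -entropyE; [exact: ent_ge0 | case: st].
set E := P / ln 2 in E0 *.
set L := log2 (n%:R : R) in L0 *.
set x := n%:R * D / ln 2.
have x0 : 0 <= x by rewrite /x divr_ge0 ?mulr_ge0 // ?ler0n // ltW.
have hx : L - E <= x.
  rewrite /L /E /x /log2 -mulrBl ler_pM2r ?invr_gt0 //.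
have -> : 2 / ln 2 * n%:R * L * D = 2 * L * x by rewrite /x; field; rewrite gt_eqF.
rewrite sub0r sqrrN.
have [hle|hlt] := lerP x L.
  have : L - x <= E by lra.
  have : 0 <= L - x by lra.
  nra.
nra.
Qed.


Lemma part_haus n : (0 < n)%N ->
  hausdorff (setA R n) (conv_hull (setA R n)) = log2 n%:R.
Proof.
move=> n0; rewrite /hausdorff.
set A := setA R n; set C := conv_hull A.
have Aa0 : A (embed (fun i => (i == Ordinal n0)%:R : R)).
  by exists (fun i => (i == Ordinal n0)%:R : R) => //; exact: simplex_delta.
set a0 := embed _ in Aa0.
have d0 a : A a -> dist_set a C = 0.
  move=> Aa; apply/le_anti/andP; split.
    by rewrite -(@edist_self _ _ a); apply: dist_le; exact: in_hull.
  apply: dist_ge; first by exists a; exact: in_hull.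
  by move=> b _; exact: sqrtr_ge0.
have S1 : sup [set dist_set a C | a in A] = 0.
  apply/le_anti/andP; split.
    apply: ge_sup; first by exists (dist_set a0 C), a0.
    by move=> _ [a Aa <-]; rewrite d0.
  have hub : has_ubound [set dist_set a C | a in A].
    by exists 0 => _ [a Aa <-]; rewrite d0.
  by rewrite -(d0 _ Aa0); apply: (ub_le_sup hub); exists a0.
have S2 : sup [set dist_set b A | b in C] = log2 n%:R.
  apply/le_anti/andP; split.
    apply: ge_sup; first by exists (dist_set (b0 n) A), (b0 n) => //; exact: b0_hull.
    by move=> _ [b Cb <-]; exact: hull_ub.
  have hub : has_ubound [set dist_set b A | b in C].
    by exists (log2 n%:R) => _ [b Cb <-]; exact: hull_ub.
  apply: le_trans (@b0_lb n n0) _; apply: (ub_le_sup hub); exists (b0 n) => //; exact: b0_hull.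
rewrite S1 S2 max_r //; exact: log2_ge0.
Qed.


Lemma part_diam n : (0 < n)%N ->
  diam (setA R n) <= 2 / Num.sqrt (ln (2 : R)) * Num.sqrt (n%:R * log2 (n%:R : R)) + log2 (n%:R : R).
Proof.
move=> n0.
have L0 := @log2_ge0 n n0.
have l2 := ln2_gt0 R.
set L := log2 (n%:R : R) in L0 *.
set B := 2 / Num.sqrt (ln (2 : R)) * Num.sqrt (n%:R * L).
have B0 : 0 <= B by rewrite mulr_ge0 ?sqrtr_ge0 // divr_ge0 ?sqrtr_ge0.
set M := Mconst R n.
have MM : M ^+ 2 = 2 / ln 2 * n%:R * L by rewrite /M Msq.
have BB : B ^+ 2 = 2 * M ^+ 2.
  have nL0 : 0 <= n%:R * L by rewrite mulr_ge0 ?ler0n.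
  rewrite MM /B exprMn (sqr_sqrtr nL0).
  rewrite [X in X * _]exprMn exprVn (sqr_sqrtr (ltW l2)).
  by field; rewrite gt_eqF.
rewrite /diam; apply: ge_sup.
  have Aa0 : setA R n (embed (fun i => (i == Ordinal n0)%:R : R)).
    by exists (fun i => (i == Ordinal n0)%:R : R) => //; exact: simplex_delta.
  by exists (edist (embed (fun i => (i == Ordinal n0)%:R : R)) (embed (fun i => (i == Ordinal n0)%:R : R))), (embed (fun i => (i == Ordinal n0)%:R : R)), (embed (fun i => (i == Ordinal n0)%:R : R)).
move=> _ [x [y [[s ss <-] [[t st <-] ->]]]].
rewrite edist_split -(ger0_norm (addr_ge0 B0 L0)) -sqrtr_sqr ler_sqrt ?sqr_ge0 //.
rewrite !embed0.
rewrite (eq_bigr (fun i => M ^+ 2 * (s i - t i) ^+ 2)); last first.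
  by move=> i _; rewrite !embedS /M; ring.
rewrite -mulr_sumr.
have D2 : \sum_i (s i - t i) ^+ 2 <= 2.
  apply: le_trans (_ : \sum_i (s i + t i) <= 2).
    apply: ler_sum => i _.
    have s0 : 0 <= s i by case: ss.
    have t0 : 0 <= t i by case: st.
    have s1 := @simplex_le1 _ _ _ i ss.
    have t1 := @simplex_le1 _ _ _ i st.
    nra.
  by rewrite big_split /=; case: ss => _ ->; case: st => _ ->; lra.
have Es0 := @ent_ge0 _ _ _ ss; have Et0 := @ent_ge0 _ _ _ st.
have EsL := @ent_le _ _ _ n0 ss; have EtL := @ent_le _ _ _ n0 st.
set D := \sum_i _ in D2 *.
rewrite -/L in EsL EtL.
have M0 : 0 <= M ^+ 2 by rewrite sqr_ge0.
have h1 : M ^+ 2 * D <= B ^+ 2.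
  by rewrite BB mulrC ler_wpM2r.
have h2 : (entropy s - entropy t) ^+ 2 <= L ^+ 2 by nra.
have h3 : 0 <= B * L by rewrite mulr_ge0.
nra.
Qed.

End Main.

Theorem theorem5p4 (R : realType) (n : nat) (hn : (4 <= n)%N) :
  approx_convex (setA R n) /\
  hausdorff (setA R n) (conv_hull (setA R n)) = log2 (n%:R : R) /\
  diam (setA R n) <= 2 / Num.sqrt (ln (2 : R)) * Num.sqrt (n%:R * log2 (n%:R : R)) + log2 (n%:R : R).
Proof.
have n0 : (0 < n)%N by apply: leq_trans hn.
split; first exact: part_ac.
split; first exact: part_haus.
exact: part_diam.
Qed.
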